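(* Let $f:\mathbb{R}\times[0,1]\to\mathbb{R}$ be measurable, let $\mu_0\in\mathbb{R}$ be fixed, let $(\xi_t)_{t\ge 0}$ be independent random variables each uniformly distributed on $[0,1]$, and define $\mu_{t+1}=\mu_t+f(\mu_t,\xi_t)$ for $t\ge 0$. Let $F(\mu,x)=\mathbb{P}_{\xi\sim U([0,1])}(f(\mu,\xi)\le x)$. Assume that $F$ is continuous at $(\mu,0)$ for every $\mu\in\mathbb{R}$, and that there exists $\mu_\circ\in\mathbb{R}$ such that (1) $F(\mu,0)<1$ for all $\mu\ge\mu_\circ$, and (2) $F(\mu,0)>0$ for all $\mu\le\mu_\circ$. Then $\limsup_{t\to\infty}|\mu_t|=\infty$ almost surely.
   Context: $U([0,1])$ denotes the uniform distribution on $[0,1]$. The sequence $(\mu_t)$ models a user's interest in a fixed item over time; the conclusion is called weak degeneracy. *)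

(* Defs.v *)
From HB Require Import structures.
From mathcomp Require Import all_boot all_order all_algebra.
From mathcomp Require Import all_classical all_reals all_analysis.
Set Implicit Arguments. Unset Strict Implicit. Unset Printing Implicit Defensive.
Import Order.TTheory GRing.Theory Num.Theory.
Import numFieldNormedType.Exports.
Local Open Scope classical_set_scope.
Local Open Scope ring_scope.

Definition mutually_independent {R : realType} {d : measure_display}
  {T : measurableType d} (P : probability T R) (X : nat -> T -> R) : Prop :=
  forall (s : seq nat) (B : nat -> set R), uniq s ->
    (forall i, measurable (B i)) ->
    P (\big[setI/setT]_(i <- s) (X i @^-1` B i)) =
    (\prod_(i <- s) P (X i @^-1` B i))%E.

Definition U01 {R : realType} : set R -> \bar R := uniform_prob (@ltr01 R).

Fixpoint proc {R : realType} {T : Type} (f : R * R -> R) (mu0 : R)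
  (xi : nat -> T -> R) (t : nat) (w : T) : R :=
  match t with
  | O => mu0
  | S t' => proc f mu0 xi t' w + f (proc f mu0 xi t' w, xi t' w)
  end.

Definition Fcdf {R : realType} (f : R * R -> R) (m x : R) : R :=
  fine (U01 [set u : R | f (m, u) <= x]).

(* Main.v *)
Require Import Defs.
From HB Require Import structures.
From mathcomp Require Import all_boot all_order all_algebra.
From mathcomp Require Import all_classical all_reals all_analysis.
From mathcomp Require Import ring lra measurable_realfun.
Import Order.TTheory GRing.Theory Num.Theory.
Import numFieldNormedType.Exports.
Local Open Scope classical_set_scope.
Local Open Scope ring_scope.

Set Implicit Arguments. Unset Strict Implicit. Unset Printing Implicit Defensive.

Section indep.
Context {R : realType} {d : measure_display} {T : measurableType d}
  (P : probability T R) (xi : nat -> T -> R).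
Hypothesis mxi : forall t, measurable_fun setT (xi t).
Hypothesis indep : mutually_independent P xi.

Definition Gen (t : nat) : set (set T) :=
  [set A | exists B : nat -> set R, (forall i, measurable (B i)) /\
     A = \big[setI/setT]_(i <- iota 0 t) (xi i @^-1` B i)].
Definition Sig t := <<s Gen t>>.

Lemma Gen_meas t : Gen t `<=` measurable.
Proof.
move=> _ [B [mB ->]]; elim: (iota 0 t) => [|j s IH]; rewrite ?big_nil ?big_cons //.
apply: measurableI => //; rewrite -[X in measurable X]setTI; exact: mxi.
Qed.

Lemma Sig_meas t : Sig t `<=` measurable.
Proof. apply: smallest_sub; [exact: sigma_algebra_measurable | exact: Gen_meas]. Qed.

Lemma bigI_iota_xi (i t : nat) A : (i < t)%N ->
  \big[setI/setT]_(j <- iota 0 t) (xi j @^-1` (if j == i then A else setT))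
  = xi i @^-1` A.
Proof.
move=> it; rewrite (big_rem i) ?mem_iota //= eqxx big1_seq ?setIT //.
move=> j /andP[_]; rewrite mem_rem_uniq ?iota_uniq // inE => /andP[/negbTE -> _].
by rewrite preimage_setT.
Qed.

Lemma xi_Sig i t A : (i < t)%N -> measurable A -> Sig t (xi i @^-1` A).
Proof.
move=> it mA; apply: sub_gen_smallest.
exists (fun j => if j == i then A else setT); split; first by move=> j; case: ifP.
by rewrite bigI_iota_xi.
Qed.

Lemma Sig_mono t t' : (t <= t')%N -> Sig t `<=` Sig t'.
Proof.
move=> tt'; apply: smallest_sub; first exact: smallest_sigma_algebra.
move=> _ [B [mB ->]]; apply: sub_gen_smallest.
exists (fun j => if (j < t)%N then B j else setT); split.
  by move=> j; case: ifP.
rewrite -(subnKC tt') iotaD big_cat /= [X in _ = _ `&` X]big1_seq ?setIT.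
  by apply: eq_big_seq => j; rewrite mem_iota => /andP[_ ->].
by move=> j /andP[_]; rewrite mem_iota => /andP[+ _]; rewrite leqNgt => /negbTE ->;
  rewrite preimage_setT.
Qed.


Lemma Gen_setI t : setI_closed (Gen t).
Proof.
move=> _ _ [B [mB ->]] [B' [mB' ->]]; exists (fun i => B i `&` B' i); split.
  by move=> i; exact: measurableI.
by rewrite -big_split /=; apply: eq_bigr => i _; rewrite preimage_setI.
Qed.

Lemma Pfin (A : set T) : measurable A -> P A = (fine (P A))%:E.
Proof. by move=> mA; rewrite fineK // fin_num_measure. Qed.

Lemma eq_aux (a b : R) : (a%:E - b%:E * a%:E = (1 - b%:E) * a%:E)%E.
Proof. by rewrite -EFinM -EFinB -EFinB -EFinM; congr EFin; ring. Qed.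

Lemma PD (A B : set T) : measurable A -> measurable B ->
  P (A `\` B) = (P A - P (A `&` B))%E.
Proof. move=> mA mB; apply: measureD => //; by rewrite ltey_eq fin_num_measure. Qed.

Lemma indep_Sig t (A : set T) (B : set R) : Sig t A -> measurable B ->
  P (A `&` xi t @^-1` B) = (P A * P (xi t @^-1` B))%E.
Proof.
move=> SA mB.
have mX : measurable (xi t @^-1` B).
  by rewrite -[X in measurable X]setTI; exact: mxi.
set X := xi t @^-1` B in mX *.
have := @dynkin_induction _ (g_sigma_algebraType (Gen t)) (Gen t)
  (fun A => P (A `&` X) = (P A * P X)%E) erefl (@Gen_setI t).
apply => //.
- by rewrite setTI probability_setT mul1e.
- move=> _ [Bs [mBs ->]].
  pose B2 j := if j == t then B else Bs j.
  have mB2 j : measurable (B2 j) by rewrite /B2; case: ifP.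
  have tN : t \notin iota 0 t by rewrite mem_iota ltnn andbF.
  have := indep (s:=rcons (iota 0 t) t) (B:=B2); rewrite rcons_uniq tN iota_uniq => /(_ isT mB2).
  rewrite -cats1 !big_cat /= !big_seq1 /B2 eqxx.
  have E1 : \big[setI/setT]_(i <- iota 0 t) (xi i @^-1` (if i == t then B else Bs i))
      = \big[setI/setT]_(i <- iota 0 t) (xi i @^-1` Bs i).
    apply: eq_big_seq => j jt; case: eqP => // jt'; by rewrite jt' (negbTE tN) in jt.
  have E2 : (\prod_(i <- iota 0 t) P (xi i @^-1` (if i == t then B else Bs i)))%E
      = (\prod_(i <- iota 0 t) P (xi i @^-1` Bs i))%E.
    apply: eq_big_seq => j jt; case: eqP => // jt'; by rewrite jt' (negbTE tN) in jt.
  rewrite E1 E2 => ->; congr (_ * _)%E.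
  by rewrite (indep (iota_uniq 0 t) mBs).
- move=> S mS HS.
  have mST : measurable (S : set T) := Sig_meas mS.
  have HS' : P ((S : set T) `&` X) = (P (S:set T) * P X)%E := HS.
  change (P (~` (S : set T) `&` X) = (P (~` (S:set T)) * P X)%E).
  rewrite setIC -setDE PD // [X `&` _]setIC HS' probability_setC //.
  rewrite (Pfin mX) (Pfin mST); exact: eq_aux.
- move=> F mF tF HF.
  have HF' : forall n, P ((F n : set T) `&` X) = (P (F n : set T) * P X)%E := HF.
  change (P ((\bigcup_k (F k : set T)) `&` X) = (P (\bigcup_k (F k : set T)) * P X)%E).
  rewrite setI_bigcupl.
  rewrite (measure_bigcup P [set: nat]); last 2 first.
  + by move=> i _; apply: measurableI => //; exact: (Sig_meas (mF i)).
  + exact: trivIset_setIr.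
  rewrite (measure_bigcup P [set: nat]); last 2 first.
  + by move=> i _; exact: (Sig_meas (mF i)).
  + exact: tF.
  rewrite (eq_eseriesr (fun i _ => HF' i)) (Pfin mX).
  under eq_eseriesr do rewrite muleC.
  rewrite nneseriesZl; first by rewrite muleC.
  by move=> i _; exact: measure_ge0.
Qed.


Hypothesis xiU : forall t (A : set R), measurable A -> P (xi t @^-1` A) = U01 A.

Section prodlaw.
Variables (t : nat) (d' : measure_display) (T' : measurableType d') (Z : T -> T').
Hypothesis mZ : measurable_fun (T := g_sigma_algebraType (Gen t)) setT Z.

Lemma Sig_pre (A : set T') : measurable A -> Sig t (Z @^-1` A).
Proof. by move=> mA; have := mZ measurableT mA; rewrite setTI. Qed.

Lemma mZT : measurable_fun setT Z.
Proof. by move=> _ A mA; rewrite setTI; apply: Sig_meas; exact: Sig_pre. Qed.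

Local Notation RL := (g_sigma_algebraType R.-ocitv.-measurable).

Lemma prod_law (Xs : set (T' * RL)) : measurable Xs ->
  P ((fun w => (Z w, xi t w)) @^-1` Xs) =
  (\int[P]_w U01 (xsection Xs (Z w)))%E.
Proof.
move=> mXs.
have zP : Z \in mfun by rewrite inE; exact: mZT.
have mxiL : measurable_fun setT (xi t : T -> RL) := mxi t.
have pP : ((fun w => (Z w, xi t w)) : T -> T' * RL) \in mfun.
  by rewrite inE; exact: measurable_fun_pair mZT mxiL.
pose m1 := distribution P (mfun_Sub zP).
pose m' := distribution P (mfun_Sub pP).
have := @product_measure_unique _ _ T' _ R m1 (uniform_prob (@ltr01 R)) m' _ Xs mXs.
have H : forall (A : set T') (B : set RL), measurable A -> measurable B ->
    m' (A `*` B) = (m1 A * uniform_prob ltr01 B)%E.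
  move=> A B mA mB.
  change (P (Z @^-1` A `&` xi t @^-1` B) = (P (Z @^-1` A) * U01 B)%E).
  by rewrite (indep_Sig (Sig_pre mA) mB) xiU.
move=> /(_ H) HH.
have HH' : (m1 \x uniform_prob ltr01)%E Xs = P ((fun w => (Z w, xi t w)) @^-1` Xs) := HH.
rewrite -HH'.
change ((\int[m1]_x ((uniform_prob ltr01) \o xsection Xs) x)%E =
  (\int[P]_w U01 (xsection Xs (Z w)))%E).
rewrite /m1 ge0_integral_distribution //.
- exact: measurable_fun_xsection.
Qed.

End prodlaw.

Local Notation RL := (g_sigma_algebraType R.-ocitv.-measurable).

Lemma key t (mu : T -> R) (E : set T) (G : set (R * RL)) (p : R) :
  0 <= p -> measurable_fun (T := g_sigma_algebraType (Gen t)) setT mu ->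
  Sig t E -> measurable G -> (forall m, (p%:E <= U01 (xsection G m))%E) ->
  (p%:E * P E <= P (E `&` [set w | G (mu w, xi t w)]))%E.
Proof.
move=> p0 mmu SE mG Gp.
have mET : measurable E := Sig_meas SE.
pose Z := fun w => (mu w, (\1_E w : R)).
have mZ : measurable_fun (T := g_sigma_algebraType (Gen t)) setT Z.
  apply: measurable_fun_pair => //; exact: measurable_indic.
pose Xs : set ((R * R) * RL) := [set x | x.1.2 = 1 /\ G (x.1.1, x.2)].
have mXs : measurable Xs.
  have -> : Xs = ((fun x : (R * R) * RL => x.1.2) @^-1` [set 1]) `&`
      ((fun x : (R * R) * RL => (x.1.1, x.2)) @^-1` G) by [].
  apply: measurableI.
    have m12 : measurable_fun setT (fun x : (R * R) * RL => x.1.2) :=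
      measurableT_comp measurable_snd measurable_fst.
    by have := m12 measurableT [set 1] (measurable_set1 1); rewrite setTI.
  have m2 : measurable_fun setT (fun x : (R * R) * RL => (x.1.1, x.2)) :=
    measurable_fun_pair (measurableT_comp measurable_fst measurable_fst) measurable_snd.
  by have := m2 measurableT G mG; rewrite setTI.
have -> : E `&` [set w | G (mu w, xi t w)] = (fun w => (Z w, xi t w)) @^-1` Xs.
  apply/seteqP; split => w /=; rewrite /Xs /Z /=.
    by move=> [Ew Gw]; rewrite indicE mem_set.
  move=> [+ Gw]; rewrite indicE; case: (boolP (w \in E)) => [/set_mem //| _] /=.
  by move/eqP; rewrite eq_sym oner_eq0.
rewrite (prod_law mZ mXs).
have mg : measurable_fun [set: T] (fun w => U01 (xsection Xs (Z w))).
  exact: (measurableT_comp (@measurable_fun_xsection _ _ _ _ _ (uniform_prob ltr01) _ mXs) (mZT mZ)).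
apply: (@le_trans _ _ (\int[P]_(w in E) U01 (xsection Xs (Z w)))%E); last first.
  apply: ge0_subset_integral => //; by move=> w _; exact: measure_ge0.
rewrite -(integral_cst P mET); apply: ge0_le_integral => //.
- exact: measurable_funTS.
move=> w Ew; rewrite /Z indicE mem_set //.
have -> : xsection Xs (mu w, 1) = xsection G (mu w).
  apply/seteqP; split => y; rewrite /xsection /Xs /= => /set_mem /=.
    by move=> [_ ?]; exact/mem_set.
  by move=> ?; exact/mem_set.
exact: Gp.
Qed.
End indep.

Set Implicit Arguments. Unset Strict Implicit. Unset Printing Implicit Defensive.

Local Notation RL R := (g_sigma_algebraType R.-ocitv.-measurable).

Lemma geo_small {R : realType} (r x : R) : 0 <= r < 1 -> 0 < x ->
  exists n, r ^+ n < x.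
Proof.
move=> /andP[r0 r1] x0.
have := @cvg_expr R r; rewrite ger0_norm // => /(_ r1).
move/cvgrPdist_lt => /(_ x x0) [N _ HN]; exists N.
have := HN N (leqnn N); rewrite /= sub0r normrN ger0_norm //; exact: exprn_ge0.
Qed.

Lemma bigI_mem {T : Type} (l : seq nat) (F : nat -> set T) w :
  (\big[setI/setT]_(j <- l) F j) w <-> (forall j, j \in l -> F j w).
Proof.
elim: l => [|a l IH]; rewrite ?big_nil ?big_cons; first by split.
split.
  move=> [Fa /IH H] j; rewrite inE => /orP[/eqP -> //|]; exact: H.
move=> H; split; first by apply: H; rewrite inE eqxx.
by apply/IH => j jl; apply: H; rewrite inE jl orbT.
Qed.

Lemma aux2 {R : realType} (q c e : R) : (q%:E * c%:E <= e%:E)%E ->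
  (c%:E - e%:E <= (1 - q)%:E * c%:E)%E.
Proof.
rewrite -EFinM lee_fin => H; rewrite -EFinB -EFinM lee_fin mulrBl mul1r; exact: lerB.
Qed.

Section proc.
Context {R : realType} {d : measure_display} {T : measurableType d}
  (P : probability T R) (xi : nat -> T -> R).
Hypothesis mxi : forall t, measurable_fun setT (xi t).
Hypothesis indep : mutually_independent P xi.
Hypothesis xiU : forall t (A : set R), measurable A -> P (xi t @^-1` A) = U01 A.
Variables (f : R * R -> R) (mu0 : R).
Hypothesis mf : measurable_fun setT f.

Local Notation mu := (proc f mu0 xi).

Lemma xi_meas t t' : (t < t')%N ->
  measurable_fun (T := g_sigma_algebraType (Gen xi t')) setT (xi t).
Proof. by move=> tt' _ A mA; rewrite setTI; exact: xi_Sig. Qed.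

Lemma mproc t t' : (t <= t')%N ->
  measurable_fun (T := g_sigma_algebraType (Gen xi t')) setT (mu t).
Proof.
elim: t => [|t IH] tt' /=; first exact: measurable_cst.
have mt := IH (ltnW tt').
apply: measurable_funD => //.
exact: (measurableT_comp mf (measurable_fun_pair mt (xi_meas tt'))).
Qed.

Lemma mprocT t : measurable_fun setT (mu t).
Proof. exact: (mZT mxi (mproc (leqnn t))). Qed.

Variables (G : set (R * RL R)) (p : R) (k : nat).
Hypothesis mG : measurable G.
Hypothesis p0 : 0 <= p.
Hypothesis p1 : p <= 1.
Hypothesis Gp : forall m, (p%:E <= U01 (xsection G m))%E.

Definition Good t := [set w | G (mu t w, xi t w)].

Lemma Good_Sig t : Sig xi t.+1 (Good t).
Proof.
have mp : measurable_fun (T := g_sigma_algebraType (Gen xi t.+1)) setT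
   (fun w => (mu t w, xi t w)).
  exact: measurable_fun_pair (mproc (leqnSn t)) (xi_meas (ltnSn t)).
by have := mp measurableT G mG; rewrite setTI.
Qed.

Definition Dn a n := \big[setI/setT]_(j <- iota a n) Good j.

Lemma SigI t (A B : set T) : Sig xi t A -> Sig xi t B -> Sig xi t (A `&` B).
Proof. exact: (@measurableI _ (g_sigma_algebraType (Gen xi t))). Qed.

Lemma SigC t (A : set T) : Sig xi t A -> Sig xi t (~` A).
Proof. exact: (@measurableC _ (g_sigma_algebraType (Gen xi t))). Qed.

Lemma SigT t : Sig xi t setT.
Proof. exact: (@measurableT _ (g_sigma_algebraType (Gen xi t))). Qed.

Lemma Dn_Sig a n : Sig xi (a + n) (Dn a n).
Proof.
rewrite /Dn big_seq; apply: big_ind; [exact: SigT| exact: SigI|].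
move=> j; rewrite mem_iota => /andP[_ ja].
exact: (Sig_mono ja (Good_Sig (t:=j))).
Qed.

Lemma block a n (E : set T) : Sig xi a E ->
  ((p ^+ n)%:E * P E <= P (E `&` Dn a n))%E.
Proof.
move=> SE; elim: n => [|n IH].
  by rewrite expr0 mul1e /Dn big_nil setIT.
have SEn : Sig xi (a + n) (E `&` Dn a n).
  by apply: SigI => //; [exact: (Sig_mono (leq_addr n a) SE)|exact: Dn_Sig].
rewrite /Dn -addn1 iotaD big_cat /= big_seq1 setIA -/(Dn a n).
have := key mxi indep xiU p0 (mproc (leqnn (a + n))) SEn mG Gp.
apply: le_trans.
rewrite addn1 exprSr mulrC EFinM -muleA.
rewrite lee_wpmul2l // lee_fin.
Qed.


Variable s : nat.

Definition Cn n := \big[setI/setT]_(j <- iota 0 n) ~` Dn (s + j * k) k.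

Lemma Cn_Sig n : Sig xi (s + n * k) (Cn n).
Proof.
rewrite /Cn big_seq; apply: big_ind; [exact: SigT| exact: SigI|].
move=> j; rewrite mem_iota add0n => /andP[_ jn]; apply: SigC.
apply: (Sig_mono _ (Dn_Sig (a:=s + j * k) (n:=k))).
by rewrite -addnA leq_add2l addnC -mulSn leq_mul2r jn orbT.
Qed.

Lemma Cn_step n : (P (Cn n.+1) <= (1 - p ^+ k)%:E * P (Cn n))%E.
Proof.
have SC : Sig xi (s + n * k) (Cn n) := Cn_Sig (n:=n).
have mC : measurable (Cn n) := Sig_meas mxi SC.
have mD : measurable (Dn (s + n * k) k) := Sig_meas mxi (Dn_Sig (a:=s + n * k) (n:=k)).
have -> : Cn n.+1 = Cn n `\` Dn (s + n * k) k.
  by rewrite /Cn -addn1 iotaD big_cat /= big_seq1 setDE.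
rewrite PD //.
have := block k SC.
rewrite (Pfin P mC) (Pfin P (measurableI _ _ mC mD)); exact: aux2.
Qed.

Lemma Cn_bound n : (P (Cn n) <= ((1 - p ^+ k) ^+ n)%:E)%E.
Proof.
elim: n => [|n IH]; first by rewrite /Cn big_nil expr0 probability_le1.
apply: (le_trans (Cn_step n)); rewrite exprS EFinM.
rewrite lee_wpmul2l // lee_fin subr_ge0; exact: exprn_ile1.
Qed.

Variable M : R.
Hypothesis Hdet : forall w a, (forall j, (a <= j < a + k)%N -> Good j w) ->
  (forall j, (a <= j <= a + k)%N -> `|mu j w| <= M) -> False.

Definition Stay := \bigcap_(t in [set t | (s <= t)%N]) [set w | `|mu t w| <= M].

Lemma Stay_meas : measurable Stay.
Proof.
apply: bigcap_measurable; first by exists s => /=.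
move=> t _.
have -> : [set w | `|mu t w| <= M] = mu t @^-1` `[-M, M].
  by apply/seteqP; split => w /=; rewrite in_itv /= ler_norml.
by have := mprocT t measurableT (measurable_itv `[-M, M]); rewrite setTI.
Qed.

Lemma Stay_Cn n : Stay `<=` Cn n.
Proof.
move=> w Sw; apply/bigI_mem => j _ /bigI_mem HD.
apply: (Hdet (a := s + j * k) (w := w)).
  by move=> i /andP[h1 h2]; apply: HD; rewrite mem_iota h1 h2.
move=> i /andP[h1 h2]; apply: Sw => /=.
exact: leq_trans (leq_addr _ _) h1.
Qed.

Hypothesis pk0 : 0 < p ^+ k.

Lemma Stay0 : P Stay = 0%E.
Proof.
have mS := Stay_meas.
rewrite (Pfin P mS); congr EFin.
have x0 : 0 <= fine (P Stay) by apply: fine_ge0; exact: measure_ge0.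
apply/eqP; rewrite eq_le x0 andbT; rewrite leNgt; apply/negP => xp.
have [n Hn] : exists n, (1 - p ^+ k) ^+ n < fine (P Stay).
  apply: geo_small => //; rewrite subr_ge0 exprn_ile1 //= ltrBlDr ltrDl //.
have H : (P Stay <= ((1 - p ^+ k) ^+ n)%:E)%E := le_trans (le_measure _ (mem_set mS) (mem_set (Sig_meas mxi (Cn_Sig (n:=n)))) (Stay_Cn n)) (Cn_bound n).
move: H; rewrite (Pfin P mS) lee_fin => H.
by move: (lt_le_trans Hn H); rewrite ltxx.
Qed.

End proc.

Set Implicit Arguments. Unset Strict Implicit. Unset Printing Implicit Defensive.

Lemma small_nbhs {R : realType} (B : set R) (e : R) : nbhs (0:R) B -> 0 < e ->
  0^'+ [set i | B i /\ B (- i) /\ i < e].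
Proof.
move=> /nbhs_ballP [r /= r0 Br] e0.
have H : nbhs (0:R) [set i | B i /\ B (- i) /\ i < e].
  apply/nbhs_ballP; exists (Num.min r e); first by rewrite /= lt_min r0 e0.
  move=> i; rewrite /ball /= sub0r normrN lt_min => /andP[ir ie].
  split; first by apply: Br; rewrite /ball /= sub0r normrN.
  split; first by apply: Br; rewrite /ball /= sub0r opprK.
  by move: ie; rewrite ltr_norml => /andP[].
exact: (@cvg_within _ (nbhs (0:R)) _ [set y | 0 < y] _ H).
Qed.

Lemma up_near {R : realType} (g : R * R -> R) x : {for (x,0), continuous g} ->
  g (x,0) < 1 -> \forall x' \near x & i \near 0^'+, g (x', i) <= 1 - i.
Proof.
move=> cg g1; pose e := (1 - g (x,0)) / 2.
have e0 : 0 < e by rewrite divr_gt0 // subr_gt0.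
move: cg => /cvgrPdist_lt /(_ e e0) [[A B] /= [nA nB] sAB].
exists (A, [set i | B i /\ B (- i) /\ i < e]); first by split => //; exact: small_nbhs.
move=> [a b] /= [Aa [Bb [_ be]]].
have := sAB (a, b) (conj Aa Bb); rewrite /= ltr_norml => /andP[h1 h2].
rewrite /e in be h1 h2; lra.
Qed.

Lemma lo_near {R : realType} (g : R * R -> R) x : {for (x,0), continuous g} ->
  0 < g (x,0) -> \forall x' \near x & i \near 0^'+, i <= g (x', - i).
Proof.
move=> cg g1; pose e := g (x,0) / 2.
have e0 : 0 < e by rewrite divr_gt0.
move: cg => /cvgrPdist_lt /(_ e e0) [[A B] /= [nA nB] sAB].
exists (A, [set i | B i /\ B (- i) /\ i < e]); first by split => //; exact: small_nbhs.
move=> [a b] /= [Aa [_ [Bb be]]].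
have := sAB (a, - b) (conj Aa Bb); rewrite /= ltr_norml => /andP[h1 h2].
rewrite /e in be h1 h2; lra.
Qed.

Lemma nbhs_lift {R : realType} {I : Type} (F : set_system I) {FF : Filter F} (x : R) (A : set R) :
  nbhs x A -> \forall x' \near x & i \near F, A x'.
Proof. by move=> nA; exists (A, setT) => //; [split => //; exact: filterT| move=> [? ?] []]. Qed.

Lemma prod_and {R : realType} {I : Type} (F : set_system I) {FF : Filter F} (x : R)
  (P1 P2 Q : R -> I -> Prop) :
  (\forall x' \near x & i \near F, P1 x' i) ->
  (\forall x' \near x & i \near F, P2 x' i) ->
  (forall x' i, P1 x' i -> P2 x' i -> Q x' i) ->
  \forall x' \near x & i \near F, Q x' i.
Proof.
move=> [[A1 B1] [nA1 nB1] s1] [[A2 B2] [nA2 nB2] s2] h.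
exists (A1 `&` A2, B1 `&` B2); first by split; exact: filterI.
move=> [a b] /= [[? ?] [? ?]]; apply: h; [exact: (s1 (a, b))|exact: (s2 (a, b))].
Qed.

Lemma choose_i {R : realType} (g : R * R -> R) (mc M : R) :
  (forall m : R, {for (m, 0), continuous g}) ->
  (forall m, mc <= m -> g (m, 0) < 1) ->
  (forall m, m <= mc -> 0 < g (m, 0)) ->
  exists i, [/\ 0 < i, i < 1 &
    forall x, - M <= x <= M ->
      (mc <= x -> g (x, i) <= 1 - i) /\ (x < mc -> i <= g (x, - i))].
Proof.
move=> cg H1 H2.
pose Pp i x := (mc <= x -> g (x, i) <= 1 - i) /\ (x < mc -> i <= g (x, - i)).
have loc : forall x, `[- M, M]%classic x -> \forall x' \near x & i \near 0^'+, Pp i x'.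
  move=> x _; case: (ltgtP x mc) => xmc.
  - apply: (prod_and (lo_near (cg x) (H2 _ (ltW xmc)))
      (nbhs_lift (F:=0^'+) (lt_nbhsl xmc))) => x' i h1 h2.
    by split => // h; move: (le_lt_trans h h2); rewrite ltxx.
  - apply: (prod_and (up_near (cg x) (H1 _ (ltW xmc)))
      (nbhs_lift (F:=0^'+) (lt_nbhsr xmc))) => x' i h1 h2.
    by split => // h; move: (lt_trans h h2); rewrite ltxx.
  - rewrite -xmc in H1 H2 *.
    by apply: (prod_and (up_near (cg x) (H1 _ (lexx x))) (lo_near (cg x) (H2 _ (lexx x)))).
have := (iffLR (compact_near_coveringP _)) (@segment_compact R (- M) M) R (0^'+) Pp _ loc.
move=> /(_ _) cov.
near (0:R)^'+ => i.
exists i; split.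
- by near: i; exact: nbhs_right_gt.
- by near: i; exact: nbhs_right_lt.
- move=> x xM; have : `[- M, M]%classic `<=` Pp i by near: i; exact: cov.
  by apply; rewrite /= in_itv /=.
Unshelve. all: by end_near.
Qed.

Lemma limsup_oo {R : realType} (u : nat -> R) :
  (forall (N : nat) n, exists2 k, (n <= k)%N & N%:R < `|u k|) ->
  limn_esup (fun t => (`|u t|)%:E) = +oo%E.
Proof.
move=> H; rewrite limn_esup_lim; apply: cvg_lim => //; apply/cvgeyPge => M.
apply: nearW => n.
have [k nk Hk] := H (Num.Def.archi_bound `|M|) n.
apply: ereal_sup_ge; exists (`|u k|%:E); first by exists k.
rewrite lee_fin; apply: (le_trans (ler_norm M)); apply: ltW.
exact: lt_trans (archi_boundP (normr_ge0 M)) Hk.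
Qed.

Lemma det {R : realType} (g : R * R -> R) (mu : nat -> R) (xi : nat -> R)
  (mc M i : R) (k a : nat) :
  (forall j, mu j.+1 = mu j + g (mu j, xi j)) -> 0 < i -> 2 * M < k%:R * i ->
  (forall j, (a <= j < a + k)%N ->
    (mc <= mu j /\ i < g (mu j, xi j)) \/ (mu j < mc /\ g (mu j, xi j) <= - i)
    \/ M < `|mu j|) ->
  (forall j, (a <= j <= a + k)%N -> `|mu j| <= M) -> False.
Proof.
move=> rec i0 kM HG HM.
have Ma : `|mu a| <= M by apply: HM; rewrite leqnn leq_addr.
have Mk : `|mu (a + k)%N| <= M by apply: HM; rewrite leq_addr leqnn.
have Mn n : (n < k)%N -> `|mu (a + n)%N| <= M.
  by move=> nk; apply: HM; rewrite leq_addr /= leq_add2l ltnW.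
have HGn n : (n < k)%N -> (mc <= mu (a + n)%N /\ i < g (mu (a + n)%N, xi (a + n)%N))
    \/ (mu (a + n)%N < mc /\ g (mu (a + n)%N, xi (a + n)%N) <= - i) \/ M < `|mu (a + n)%N|.
  by move=> nk; apply: HG; rewrite leq_addr ltn_add2l nk.
move: Ma Mk; rewrite !ler_norml => /andP[Ma1 Ma2] /andP[Mk1 Mk2].
case: (leP mc (mu a)) => ha.
- have claim n : (n <= k)%N -> mc <= mu (a + n)%N /\ mu a + n%:R * i <= mu (a + n)%N.
    elim: n => [|n IH] nk; first by rewrite addn0 mul0r addr0.
    have [h1 h2] := IH (ltnW nk).
    have := Mn n nk; rewrite ler_norml => /andP[m1 m2].
    case: (HGn n nk) => [[_ hg]|[[hm _]|hM]].
    + rewrite addnS rec -natr1 mulrDl mul1r; split; lra.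
    + lra.
    + by move: hM; rewrite ltNge ler_norml m1 m2.
  have [_ h] := claim k (leqnn k).
  nra.
- have claim n : (n <= k)%N -> mu (a + n)%N < mc /\ mu (a + n)%N <= mu a - n%:R * i.
    elim: n => [|n IH] nk; first by rewrite addn0 mul0r subr0.
    have [h1 h2] := IH (ltnW nk).
    have := Mn n nk; rewrite ler_norml => /andP[m1 m2].
    case: (HGn n nk) => [[hm _]|[[_ hg]|hM]].
    + lra.
    + rewrite addnS rec -natr1 mulrDl mul1r; split; lra.
    + by move: hM; rewrite ltNge ler_norml m1 m2.
  have [_ h] := claim k (leqnn k).
  nra.
Qed.

Set Implicit Arguments. Unset Strict Implicit. Unset Printing Implicit Defensive.

Lemma U01_eq {R : realType} (A B : set R) :
  A `&` `[0, 1]%classic = B `&` `[0, 1]%classic -> U01 A = U01 B.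
Proof.
by move=> AB; rewrite /U01 /uniform_prob integral_uniform_pdf AB -integral_uniform_pdf.
Qed.

Lemma pre_le {R : realType} (h : R -> R) (x : R) : measurable_fun setT h ->
  measurable [set u | h u <= x].
Proof.
move=> mh; have -> : [set u | h u <= x] = h @^-1` `]-oo, x].
  by apply/seteqP; split => u /=; rewrite in_itv.
by have := mh measurableT _ (measurable_itv `]-oo, x]); rewrite setTI.
Qed.

Lemma probC_ge {R : realType} {d} {T : measurableType d} (Q : probability T R)
  (A : set T) (x i : R) : measurable A -> Q A = x%:E -> i <= 1 - x ->
  (i%:E <= Q (~` A))%E.
Proof. by move=> mA QA h; rewrite probability_setC // QA lee_fin. Qed.

Lemma prob_ge {R : realType} {d} {T : measurableType d} (Q : probability T R)
  (A : set T) (x i : R) : Q A = x%:E -> i <= x -> (i%:E <= Q A)%E.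
Proof. by move=> QA h; rewrite QA lee_fin. Qed.

Unset Implicit Arguments. Set Strict Implicit.

Theorem theorem1 (R : realType) (d : measure_display) (T : measurableType d)
  (P : probability T R) (f : R * R -> R) (mu0 : R) (xi : nat -> T -> R) :
  measurable_fun ([set: R] `*` (`[0, 1] : set R)) f ->
  (forall t, measurable_fun [set: T] (xi t)) ->
  (forall t (A : set R), measurable A -> P (xi t @^-1` A) = U01 A) ->
  mutually_independent P xi ->
  (forall m : R, {for (m, 0), continuous (fun p : R * R => Fcdf f p.1 p.2)}) ->
  (exists mc : R,
      (forall m, mc <= m -> Fcdf f m 0 < 1) /\
      (forall m, m <= mc -> 0 < Fcdf f m 0)) ->
  \forall w \ae P,
    limn_esup (fun t => (`| proc f mu0 xi t w |)%:E) = +oo%E.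
Proof.
move=> mf mxi xiU indep cont [mc [H1 H2]].
pose D : set (R * R) := [set: R] `*` `[0, 1]%classic.
have mD : measurable D by apply: measurableX => //; exact: measurable_itv.
pose f' := f \_ D.
have mf' : measurable_fun setT f' := (measurable_restrictT f mD).1 mf.
have f'E m u : `[0, 1]%classic u -> f' (m, u) = f (m, u).
  by move=> u01; rewrite /f' patchE mem_set.
have mS m : measurable_fun setT (fun u => f' (m, u)).
  exact: (measurable_fun_pair2 m mf').
have FE m x : (U01 [set u | f' (m, u) <= x]) = (Fcdf f m x)%:E.
  rewrite /Fcdf -(@U01_eq _ [set u | f' (m, u) <= x]).
    by rewrite fineK // /U01 fin_num_measure //; exact: (pre_le _ (mS m)).
  by apply/seteqP; split => u /= [h u01]; split => //; move: h; rewrite f'E.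
have stay0 (N s : nat) : P (Stay xi f' mu0 s N%:R) = 0%E.
  pose M : R := N%:R.
  have [i [i0 i1 Hi]] := choose_i M cont H1 H2.
  pose G : set (R * g_sigma_algebraType R.-ocitv.-measurable) :=
    [set z | (mc <= z.1 /\ i < f' z) \/ (z.1 < mc /\ f' z <= - i) \/ M < `|z.1|].
  have pre (h : R * g_sigma_algebraType R.-ocitv.-measurable -> R) (A : set R) :
      measurable_fun setT h -> measurable A -> measurable (h @^-1` A).
    by move=> mh mA; have := mh measurableT _ mA; rewrite setTI.
  have mG : measurable G.
    have -> : G = ((fst @^-1` `[mc, +oo[) `&` (f' @^-1` `]i, +oo[)) `|`
       ((fst @^-1` `]-oo, mc[) `&` (f' @^-1` `]-oo, - i])) `|`
       (fst @^-1` `]M, +oo[) `|` (fst @^-1` `]-oo, - M[).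
      apply/seteqP; split => z; rewrite /G /= !in_itv /= ?andbT ltr_normr ltrNr.
        case=> [[-> ->]|[[-> ->]|/orP[->|->]]].
        - by left; left; left.
        - by left; left; right.
        - by left; right.
        - by right.
      case=> [[[[-> ->]|[-> ->]]| ->]| ->].
      - by left.
      - by right; left.
      - by right; right; apply/orP; left.
      - by right; right; apply/orP; right.
    apply: measurableU; [apply: measurableU; [apply: measurableU; apply: measurableI|]|].
    - apply: pre; [exact: measurable_fst|exact: measurable_itv].
    - apply: pre; [exact: mf'|exact: measurable_itv].
    - apply: pre; [exact: measurable_fst|exact: measurable_itv].
    - apply: pre; [exact: mf'|exact: measurable_itv].
    - apply: pre; [exact: measurable_fst|exact: measurable_itv].
    - apply: pre; [exact: measurable_fst|exact: measurable_itv].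
  pose Q : probability (g_sigma_algebraType R.-ocitv.-measurable) R := uniform_prob ltr01.
  have Gp m : (i%:E <= U01 (xsection G m))%E.
    change (i%:E <= Q (xsection G m))%E.
    have mX : measurable (xsection G m) by exact: measurable_xsection.
    pose S x : set R := [set u | (f' (m, u) <= x)%R].
    have mle x : measurable (S x) := pre_le x (mS m).
    have FQ x : Q (S x) = (Fcdf f m x)%:E := FE m x.
    case: (ltP M `|m|) => hm.
      have -> : xsection G m = setT.
        by apply/seteqP; split => u // _; apply/mem_set; right; right.
      by rewrite probability_setT lee_fin ltW.
    have /andP[mM1 mM2] : - M <= m <= M by rewrite -ler_norml.
    have := Hi m; rewrite mM1 mM2 => /(_ isT) [Hup Hlo].
    case: (leP mc m) => hmc.
    + have sub : ~` (S i) `<=` xsection G m.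
        by move=> u /= h; apply/mem_set; left; split => //; rewrite ltNge; apply/negP.
      have h2 := le_measure Q (mem_set (measurableC (mle i))) (mem_set mX) sub.
      have h3 : (i%:E <= Q (~` (S i)))%E.
        have hh := probC_ge (Q:=Q) (A:=S i) (x:=Fcdf f m i) (i:=i) (mle i) (FQ i).
        apply: hh.
        have := Hup hmc; rewrite /=; lra.
      exact: le_trans h3 h2.
    + have sub : S (- i) `<=` xsection G m.
        by move=> u /= h; apply/mem_set; right; left; split.
      have h2 := le_measure Q (mem_set (mle (- i))) (mem_set mX) sub.
      have h3 : (i%:E <= Q (S (- i)%R))%E.
        have hh := prob_ge (Q:=Q) (A:=S (- i)) (x:=Fcdf f m (- i)) (i:=i) (FQ (- i)).
        by apply: hh; exact: Hlo.
      exact: le_trans h3 h2.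
  pose k := Num.Def.archi_bound (2 * M / i).
  have kM : 2 * M < k%:R * i.
    have h0 : 0 <= 2 * M / i by rewrite divr_ge0 // ?mulr_ge0 // ltW.
    by have := archi_boundP h0; rewrite ltr_pdivrMr.
  apply: (Stay0 mxi indep xiU mf' mG (ltW i0) (ltW i1) Gp s _ (exprn_gt0 k i0)).
  move=> w a HG HM.
  exact: (det (g := f') (mu := fun j => proc f' mu0 xi j w) (xi := fun j => xi j w)
    (fun j => erefl) i0 kM HG HM).
have ae1 : \forall w \ae P, forall t, `[0, 1]%classic (xi t w).
  apply: ae_foralln => t.
  have mC : measurable (~` `[0, 1]%classic : set R).
    exact: measurableC (measurable_itv _).
  exists (xi t @^-1` ~` `[0, 1]%classic); split.
  - by have := mxi t measurableT _ mC; rewrite setTI.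
  - have h0 : U01 (~` `[0, 1]%classic : set R) = 0%E.
      rewrite (@U01_eq _ _ set0); first by rewrite /U01; exact: measure0.
      by rewrite setICl set0I.
    have h1 := xiU t _ mC. rewrite h0 in h1. exact: h1.
  - by move=> w /= h.
have ae2 : \forall w \ae P, forall N s : nat, ~ Stay xi f' mu0 s N%:R w.
  apply: ae_foralln => N; apply: ae_foralln => s.
  exists (Stay xi f' mu0 s N%:R); split.
  - exact: Stay_meas.
  - exact: stay0.
  - by move=> w /= /contrapT.
apply: (filterS2 _ _ ae1 ae2) => w Hxi HS.
have eqp t : proc f mu0 xi t w = proc f' mu0 xi t w.
  by elim: t => //= t IH; rewrite IH f'E.
rewrite (_ : (fun t => (`|proc f mu0 xi t w|)%:E) =
   (fun t => (`|proc f' mu0 xi t w|)%:E)); last first.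
  by apply/funext => t; rewrite eqp.
apply: limsup_oo => N n.
have := HS N n; rewrite /Stay => /existsNP [t /not_implyP [nt h]].
by exists t => //; rewrite ltNge; apply/negP.
Qed.
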